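(* Let $r:\mathbb{R}^\ell\to\mathbb{R}^m$ be differentiable with Jacobian $J_r$, let $\mu>0$ be differentiable near $x$ with $\eta=\log\mu$, and suppose $J_r(x)$ has full column rank. Let $p=-J_r^+r$ (all quantities at $x$), $\beta=1-\langle p,\nabla\eta\rangle$, $P=I-J_rJ_r^+$, $\omega=\|Pr\|_2^2\|(J_r^+)^T\nabla\eta\|_2^2+\beta^2$, and assume $\omega\ne0$. Then the Gauss--Newton step for the deflated residual $\mu r$, namely $\hat p=-J_{\mu r}(x)^+\mu(x)r(x)$ with $J_{\mu r}=\mu J_r+r\nabla\mu^T$, satisfies $$\hat p=\beta_1p+\beta_2(J_r^TJ_r)^{-1}\nabla\eta,\qquad \beta_1=\frac{\beta}{\omega},\quad \beta_2=-\frac{\|Pr\|_2^2}{\omega}.$$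
   Context: $A^+$ denotes the Moore--Penrose pseudoinverse; for full column rank $J_r$, $J_r^+=(J_r^TJ_r)^{-1}J_r^T$. $\nabla\eta=\mu^{-1}\nabla\mu$. *)

(* Defs.v *)
From HB Require Import structures.
From mathcomp Require Import all_boot all_order all_algebra.
From mathcomp Require Import all_classical all_reals all_analysis.
Set Implicit Arguments. Unset Strict Implicit. Unset Printing Implicit Defensive.
Import Order.TTheory GRing.Theory Num.Theory.
Import numFieldNormedType.Exports.
Local Open Scope ring_scope.
Local Open Scope classical_set_scope.

(* Vectors of R^n are encoded as row vectors 'rV[R]_n for the functions
   (domain of differentiation), and as column vectors 'cV[R]_n in the
   linear-algebra formulas. *)

Definition penrose (R : realType) (m n : nat) (A : 'M[R]_(m, n)) (X : 'M[R]_(n, m)) : Prop :=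
  [/\ A *m X *m A = A, X *m A *m X = X,
      (A *m X)^T = A *m X & (X *m A)^T = X *m A].

(* Moore--Penrose pseudoinverse A^+ (the unique X satisfying the Penrose
   conditions; it always exists over the reals). *)
Definition mpinv (R : realType) (m n : nat) (A : 'M[R]_(m, n)) : 'M[R]_(n, m) :=
  xget 0 (fun X => penrose A X).

(* The usual m x l Jacobian matrix of r : R^l -> R^m at x
   (MathComp-Analysis' 'J is its transpose, acting on row vectors). *)
Definition Jac (R : realType) (l m : nat) (r : 'rV[R]_l -> 'rV[R]_m) (x : 'rV[R]_l)
  : 'M[R]_(m, l) := (jacobian r x)^T.

Definition grad (R : realType) (l : nat) (mu : 'rV[R]_l -> R) (x : 'rV[R]_l) : 'cV[R]_l :=
  jacobian (fun y => const_mx (mu y) : 'rV[R]_1) x.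

Definition dotc (R : realType) (n : nat) (u v : 'cV[R]_n) : R := (u^T *m v) 0 0.
Definition sqnorm2 (R : realType) (n : nat) (v : 'cV[R]_n) : R := dotc v v.

(* Main.v *)
Require Import Defs.
From HB Require Import structures.
From mathcomp Require Import all_boot all_order all_algebra.
From mathcomp Require Import all_classical all_reals all_analysis.
From mathcomp Require Import ring.
Import Order.TTheory GRing.Theory Num.Theory.
Import numFieldNormedType.Exports.
Local Open Scope ring_scope.

Section S.
Variable R : numFieldType.
Variables (V W : normedModType R).
Definition scl (k : R) (w : W) := k *: w.
Lemma scaler_is_bilinear :
  bilinear_for
    (GRing.Scale.Law.clone _ _ *:%R _) (GRing.Scale.Law.clone _ _ *:%R _)
    scl.
Proof.
split=> [u'|u] a x y; rewrite /scl /=.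
- by rewrite scalerDl scalerA.
- by rewrite scalerDr scalerA mulrC -scalerA.
Qed.
HB.instance Definition _ := bilinear_isBilinear.Build R R W W _ _ scl
  scaler_is_bilinear.
Lemma diff_scale2 (k : V -> R) (f : V -> W) x :
  differentiable k x -> differentiable f x ->
  differentiable (fun y => k y *: f y) x /\
  'd (fun y => k y *: f y) x = (fun v => k x *: 'd f x v + 'd k x v *: f x) :> (V -> W).
Proof.
move=> dk df.
pose b : {bilinear R -> W -> W} := scl.
have bc : continuous (fun p : R * W => b p.1 p.2).
  by move=> p; apply: (@scale_continuous R W p).
have -> : (fun y => k y *: f y) = (fun p : R * W => b p.1 p.2) \o (fun y => (k y, f y)) by [].
have dp := differentiable_pair dk df.
have db := differentiable_bilin (k x, f x) bc.
split; first exact: differentiable_comp.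
by rewrite diff_comp // diff_bilin // diff_pair //.
Qed.
End S.

Section T.
Variable R : numFieldType.
Variables (l m : nat).
Lemma jac_scaleA (mu : 'rV[R]_l -> R) (r : 'rV[R]_l -> 'rV[R]_m) x :
  differentiable mu x -> differentiable r x ->
  (jacobian (fun y => mu y *: r y) x)^T = mu x *: (jacobian r x)^T
    + (r x)^T *m (jacobian (fun y => const_mx (mu y) : 'rV[R]_1) x)^T.
Proof.
move=> dmu dr.
have [_ E] := @diff_scale2 _ _ _ _ _ _ dmu dr.
rewrite /jacobian.
etransitivity; first exact: (f_equal (fun X => (lin1_mx X)^T) E).
have eg : (fun y => const_mx (mu y) : 'rV[R]_1) = (fun y => mu y *: (const_mx 1 : 'rV[R]_1)).
  by apply/funext => y; apply/matrixP => i j; rewrite !mxE mulr1.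
rewrite eg.
have E2 := @diffZl _ _ _ _ (const_mx 1 : 'rV[R]_1) _ dmu.
symmetry; etransitivity.
  exact: (f_equal (fun X => mu x *: (lin1_mx ('d r x))^T + (r x)^T *m (lin1_mx X)^T) E2).
apply/matrixP => i j.
rewrite !mxE big_ord1 !mxE.
by rewrite mulr1 [r x _ _ * _]mulrC.
Qed.
End T.


Section C.
Variable R : realType.

Lemma mx11_mul (m k : nat) (u : 'M[R]_(m, 1)) (s : 'M[R]_(1, k)) (w : 'M[R]_(k,1)) :
  u *m (s *m w) = (s *m w) 0 0 *: u.
Proof. by rewrite {1}[s *m w]mx11_scalar mul_mx_scalar. Qed.

Lemma dotcC n (u v : 'cV[R]_n) : dotc u v = dotc v u.
Proof. by rewrite /dotc -{1}[u^T *m v]trmxK trmx_mul trmxK mxE. Qed.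

Lemma dotc_mul n k (u : 'cV[R]_n) (M : 'M[R]_(n, k)) (v : 'cV[R]_k) :
  dotc u (M *m v) = dotc (M^T *m u) v.
Proof. by rewrite /dotc trmx_mul trmxK mulmxA. Qed.

Lemma dotcDr n (u v w : 'cV[R]_n) : dotc u (v + w) = dotc u v + dotc u w.
Proof. by rewrite /dotc mulmxDr mxE. Qed.

Lemma dotcZr n (u v : 'cV[R]_n) a : dotc u (a *: v) = a * dotc u v.
Proof. by rewrite /dotc -scalemxAr mxE. Qed.

Lemma dotcNr n (u v : 'cV[R]_n) : dotc u (- v) = - dotc u v.
Proof. by rewrite /dotc mulmxN mxE. Qed.

Lemma dotcBr n (u v w : 'cV[R]_n) : dotc u (v - w) = dotc u v - dotc u w.
Proof. by rewrite dotcDr dotcNr. Qed.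

Lemma sqnorm_eq0 n (u : 'cV[R]_n) : dotc u u = 0 -> u = 0.
Proof.
rewrite /dotc mxE => H.
have H' : \sum_(i < n) u i 0 * u i 0 = 0.
  by rewrite -[RHS]H; apply: eq_bigr => i _; rewrite mxE.
have H2 := psumr_eq0P (fun i (_ : true) => (eq_ind _ (fun z => 0 <= z) (sqr_ge0 (u i 0)) _ (expr2 (u i 0)))) H'.
apply/matrixP => i j; rewrite (ord1 j) mxE.
by have /eqP := H2 i isT; rewrite mulf_eq0 orbb => /eqP.
Qed.

Lemma gram_unit m n (A : 'M[R]_(m, n)) :
  (forall v : 'cV[R]_n, A *m v = 0 -> v = 0) -> A^T *m A \in unitmx.
Proof.
move=> inj; rewrite unitmxE unitfE; apply/negP => /det0P [v nz vG].
have GT : (A^T *m A)^T = A^T *m A by rewrite trmx_mul trmxK.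
have Gw : A^T *m A *m v^T = 0 by rewrite -GT -trmx_mul vG trmx0.
have : dotc (A *m v^T) (A *m v^T) = 0.
  by rewrite dotc_mul mulmxA Gw /dotc trmx0 mul0mx mxE.
move/sqnorm_eq0/inj => /(congr1 trmx); rewrite trmxK trmx0 => v0.
by move: nz; rewrite v0 eqxx.
Qed.

Lemma rank_inj m n (A : 'M[R]_(m, n)) : \rank A = n ->
  forall v : 'cV[R]_n, A *m v = 0 -> v = 0.
Proof.
move=> rk v Av.
have : row_full A by rewrite /row_full rk.
move/row_fullP => [B BA].
by rewrite -[v]mul1mx -BA -mulmxA Av mulmx0.
Qed.

Lemma mpinv_inj m n (A : 'M[R]_(m, n)) :
  (forall v : 'cV[R]_n, A *m v = 0 -> v = 0) ->
  mpinv A = invmx (A^T *m A) *m A^T.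
Proof.
move=> inj; have Gu : A^T *m A \in unitmx by apply: gram_unit.
set G := A^T *m A.
have GT : G^T = G by rewrite /G trmx_mul trmxK.
have ex : exists X, penrose A X.
  exists (invmx G *m A^T); split.
  - by rewrite -!mulmxA -/G mulVmx // mulmx1.
  - by rewrite -!mulmxA [A^T *m (A *m _)]mulmxA -/G mulKmx.
  - by rewrite !trmx_mul trmxK trmx_inv GT mulmxA.
  - by rewrite -mulmxA -/G mulVmx // trmx1.
have [H1 _ H3 _] := xgetPex 0 ex.
rewrite /mpinv; set X := xget _ _ in H1 H3 *.
have GX : G *m X = A^T.
  by rewrite /G -mulmxA -H3 -trmx_mul H1.
by rewrite -GX mulmxA mulVmx // mul1mx.
Qed.

Lemma core_id m l (J : 'M[R]_(m, l)) (rx : 'cV[R]_m) (geta : 'cV[R]_l) (b1 b2 : R) :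
  J^T *m J \in unitmx ->
  let Gi := invmx (J^T *m J) in
  let Jp := Gi *m J^T in
  let p := - (Jp *m rx) in
  let beta := 1 - dotc p geta in
  let P : 'M[R]_m := 1%:M - J *m Jp in
  let aa := sqnorm2 (P *m rx) in
  let bb := sqnorm2 (Jp^T *m geta) in
  let omega := aa * bb + beta ^+ 2 in
  omega != 0 ->
  b1 = beta / omega -> b2 = - aa / omega ->
  let q := b1 *: p + b2 *: (Gi *m geta) in
  let A := J + rx *m geta^T in
  A^T *m (A *m q + rx) = 0.
Proof.
move=> Gu Gi Jp p beta P aa bb omega om0 eb1 eb2 q A.
pose G := J^T *m J.
have GT : G^T = G by rewrite /G trmx_mul trmxK.
have GiT : Gi^T = Gi by rewrite /Gi trmx_inv GT.
have GGi : G *m Gi = 1%:M by rewrite mulmxV.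
have JpJ : Jp *m J = 1%:M by rewrite /Jp -mulmxA -/G mulVmx.
have JpT : Jp^T = J *m Gi by rewrite /Jp trmx_mul trmxK GiT.
have JpJpT : Jp *m Jp^T = Gi by rewrite JpT /Jp mulmxA -[Gi *m J^T *m J]mulmxA -/G mulVmx // mul1mx.
have f1 : dotc geta p = 1 - beta by rewrite /beta dotcC; ring.
have f2 : dotc geta (Gi *m geta) = bb.
  by rewrite /bb /sqnorm2 [RHS]dotc_mul trmxK [RHS]dotcC mulmxA JpJpT.
have PT : P^T = P.
  by rewrite /P linearB /= trmx1 trmx_mul JpT mulmxA.
have PP : P *m P = P.
  rewrite /P mulmxBl mul1mx mulmxBr mulmx1 -mulmxA [Jp *m (J *m Jp)]mulmxA JpJ mul1mx.
  by rewrite subrr subr0.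
have Prx : P *m rx = rx - J *m (Jp *m rx) by rewrite /P mulmxBl mul1mx -mulmxA.
have f3 : dotc rx (J *m p) = aa - dotc rx rx.
  have -> : aa = dotc rx (P *m rx).
    by rewrite /aa /sqnorm2 dotc_mul PT mulmxA PP dotcC.
  by rewrite Prx dotcBr /p mulmxN dotcNr; ring.
have f4 : dotc rx (J *m (Gi *m geta)) = beta - 1.
  rewrite dotc_mul dotc_mul GiT mulmxA -/Jp /beta /p [dotc (- _) _]dotcC dotcNr dotcC; ring.
have Aq : A *m q + rx = J *m q + (dotc geta q + 1) *: rx.
  by rewrite /A mulmxDl -mulmxA mx11_mul -/(dotc geta q) scalerDl scale1r addrA.
have AT : A^T = J^T + geta *m rx^T by rewrite /A linearD /= trmx_mul trmxK.
have Gq : J^T *m (J *m q) = (- b1) *: (J^T *m rx) + b2 *: geta.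
  rewrite mulmxA -/G /q mulmxDr -!scalemxAr mulmxA GGi mul1mx /p mulmxN.
  by rewrite /Jp !mulmxA GGi mul1mx scaleNr scalerN.
have dq : dotc geta q = b1 * (1 - beta) + b2 * bb.
  by rewrite /q dotcDr !dotcZr f1 f2.
have dJq : dotc rx (J *m q) = b1 * (aa - dotc rx rx) + b2 * (beta - 1).
  by rewrite /q mulmxDr -!scalemxAr dotcDr !dotcZr f3 f4.
rewrite Aq AT mulmxDl -mulmxA mx11_mul -/(dotc rx _).
rewrite mulmxDr Gq -scalemxAr [dotc rx (_ + _)]dotcDr [dotc rx (_ *: _)]dotcZr dJq.
have c1 : - b1 + (dotc geta q + 1) = 0.
  rewrite dq eb1 eb2 /omega in om0 *; field; exact: om0.
have c2 : b2 + (b1 * (aa - dotc rx rx) + b2 * (beta - 1) + (dotc geta q + 1) * dotc rx rx) = 0.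
  rewrite dq eb1 eb2 /omega in om0 *; field; exact: om0.
have -> : forall (X Y : 'cV[R]_l) a b c d, a *: X + b *: Y + c *: X + d *: Y = (a + c) *: X + (b + d) *: Y.
  by move=> X Y a b c d; apply/matrixP => i j; rewrite !mxE; ring.
by rewrite c1 c2 !scale0r addr0.
Qed.

Lemma core2 m l (J : 'M[R]_(m, l)) (rx : 'cV[R]_m) (geta : 'cV[R]_l) (b1 b2 : R) (Jp : 'M[R]_(l, m)) :
  J^T *m J \in unitmx -> Jp = invmx (J^T *m J) *m J^T ->
  let p := - (Jp *m rx) in
  let beta := 1 - dotc p geta in
  let P : 'M[R]_m := 1%:M - J *m Jp in
  let aa := sqnorm2 (P *m rx) in
  let bb := sqnorm2 (Jp^T *m geta) in
  let omega := aa * bb + beta ^+ 2 in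
  omega != 0 ->
  b1 = beta / omega -> b2 = - aa / omega ->
  let q := b1 *: p + b2 *: (invmx (J^T *m J) *m geta) in
  let A := J + rx *m geta^T in
  A^T *m (A *m q + rx) = 0.
Proof. by move=> Gu ->; exact: core_id. Qed.

Lemma A_inj m l (J : 'M[R]_(m, l)) (rx : 'cV[R]_m) (geta : 'cV[R]_l) (Jp : 'M[R]_(l, m)) :
  J^T *m J \in unitmx -> Jp = invmx (J^T *m J) *m J^T ->
  let p := - (Jp *m rx) in
  let beta := 1 - dotc p geta in
  let P : 'M[R]_m := 1%:M - J *m Jp in
  let aa := sqnorm2 (P *m rx) in
  let bb := sqnorm2 (Jp^T *m geta) in
  let omega := aa * bb + beta ^+ 2 in
  omega != 0 ->
  forall v : 'cV[R]_l, (J + rx *m geta^T) *m v = 0 -> v = 0.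
Proof.
move=> Gu eJp p beta P aa bb omega om0 v.
rewrite mulmxDl -mulmxA mx11_mul -/(dotc geta v).
set t := dotc geta v => Av.
have JpJ : Jp *m J = 1%:M by rewrite eJp -mulmxA mulVmx.
have vE : v = t *: p.
  have := congr1 (mulmx Jp) Av; rewrite mulmxDr mulmxA JpJ mul1mx -scalemxAr mulmx0.
  by move/eqP; rewrite addr_eq0 => /eqP ->; rewrite /p scalerN.
have PJ : P *m J = 0 by rewrite /P mulmxBl mul1mx -mulmxA JpJ mulmx1 subrr.
have tP : t *: (P *m rx) = 0.
  have := congr1 (mulmx P) Av; rewrite mulmxDr mulmxA PJ mul0mx add0r -scalemxAr mulmx0.
  by [].
have ta : t * aa = 0 by rewrite /aa /sqnorm2 -dotcZr tP /dotc mulmx0 mxE.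
have tb : t * beta = 0.
  have e : t = t * dotc geta p.
    by change (dotc geta v = t * dotc geta p); rewrite vE dotcZr.
  have e2 : dotc geta p = 1 - beta by rewrite /beta dotcC; ring.
  rewrite e2 in e.
  have -> : t * beta = t - t * (1 - beta) by ring.
  by rewrite -e subrr.
have t0 : t = 0.
  have h : t ^+ 2 * omega = (t * aa) * (t * bb) + (t * beta) ^+ 2.
    rewrite /omega; ring.
  rewrite ta tb mul0r expr0n /= addr0 in h.
  by move/eqP: h; rewrite mulf_eq0 (negbTE om0) orbF expf_eq0 /= => /eqP.
by rewrite vE t0 scale0r.
Qed.

Lemma final_id m l (A : 'M[R]_(m, l)) (rx : 'cV[R]_m) (q : 'cV[R]_l) (c : R) :
  c != 0 -> (forall v : 'cV[R]_l, A *m v = 0 -> v = 0) -> A^T *m (A *m q + rx) = 0 ->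
  - (mpinv (c *: A) *m (c *: rx)) = q.
Proof.
move=> c0 inj E.
have injc : forall v : 'cV[R]_l, (c *: A) *m v = 0 -> v = 0.
  move=> v; rewrite -scalemxAl => /eqP; rewrite scaler_eq0 (negbTE c0) /= => /eqP.
  exact: inj.
rewrite mpinv_inj; last exact: injc.
have Hu : (c *: A)^T *m (c *: A) \in unitmx by apply: gram_unit.
set H := (c *: A)^T *m (c *: A) in Hu *.
have Hq : H *m q = - ((c *: A)^T *m (c *: rx)).
  move: E; rewrite mulmxDr => /eqP; rewrite addr_eq0 => /eqP E.
  have tZ : (c *: A)^T = c *: A^T by apply/matrixP => i j; rewrite !mxE.
  rewrite /H tZ -!scalemxAl -!scalemxAr -!scalemxAl !scalerA -mulmxA E.
  by rewrite scalerN.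
by rewrite -mulmxA -mulmxN -Hq mulKmx.
Qed.
End C.


Lemma Jac_scale (R : realType) (l m : nat) (r : 'rV[R]_l -> 'rV[R]_m) (mu : 'rV[R]_l -> R) x :
  differentiable r x -> differentiable mu x ->
  Jac (fun y => mu y *: r y) x = mu x *: Jac r x + (r x)^T *m (grad mu x)^T.
Proof.
move=> dr dmu.
Timeout 60 exact: (@jac_scaleA _ _ _ mu r x dmu dr).
Qed.


Theorem mainTheorem3 (R : realType) (l m : nat)
  (r : 'rV[R]_l -> 'rV[R]_m) (mu : 'rV[R]_l -> R) (x : 'rV[R]_l) :
  (forall y, differentiable r y) ->
  (\forall y \near x, differentiable mu y /\ 0 < mu y) ->
  \rank (Jac r x) = l ->
  let J := Jac r x in
  let rx : 'cV[R]_m := (r x)^T in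
  let Jp := mpinv J in
  let geta : 'cV[R]_l := (mu x)^-1 *: grad mu x in
  let p : 'cV[R]_l := - (Jp *m rx) in
  let beta := 1 - dotc p geta in
  let P : 'M[R]_m := 1%:M - J *m Jp in
  let omega := sqnorm2 (P *m rx) * sqnorm2 (Jp^T *m geta) + beta ^+ 2 in
  omega != 0 ->
  let Jmur := Jac (fun y => mu y *: r y) x in
  let phat : 'cV[R]_l := - (mpinv Jmur *m (mu x *: rx)) in
  let beta1 := beta / omega in
  let beta2 := - (sqnorm2 (P *m rx)) / omega in
  phat = beta1 *: p + beta2 *: (invmx (J^T *m J) *m geta).
Proof.
move=> dr hmu rk J rx Jp geta p beta P omega om0 Jmur phat beta1 beta2.
have [dmu mupos] := nbhs_singleton hmu.
have Jinj : forall v : 'cV[R]_l, J *m v = 0 -> v = 0 by apply: rank_inj.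
have Gu : J^T *m J \in unitmx by apply: gram_unit.
have eJp : Jp = invmx (J^T *m J) *m J^T by apply: mpinv_inj.
have mu0 : mu x != 0 by rewrite gt_eqF.
have eJmur : Jmur = mu x *: (J + rx *m geta^T).
  rewrite /Jmur Jac_scale //.
  rewrite scalerDr; congr (_ + _).
  apply/matrixP => i j; rewrite !mxE big_ord1 !mxE big_ord1 !mxE.
  by rewrite mulrCA mulVKf.
have Ainj : forall v : 'cV[R]_l, (J + rx *m geta^T) *m v = 0 -> v = 0.
  exact: (A_inj _ _ _ _ _ _ _ Gu eJp om0).
have Cq : (J + rx *m geta^T)^T *m ((J + rx *m geta^T) *m (beta1 *: p + beta2 *: (invmx (J^T *m J) *m geta)) + rx) = 0.
  exact: (core2 _ _ _ _ _ _ _ _ _ Gu eJp om0 erefl erefl).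
rewrite /phat eJmur.
exact: (final_id _ _ _ _ _ _ _ mu0 Ainj Cq).
Qed.
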